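(* Let $k\ge1$ be an integer and let $\mathbf{x}\in A^{\mathbb{N}}$ be a sequence such that its length-$k$ sliding-block code $B_k(\mathbf{x})$ is automatic in some regular numeration system $\mathcal{N}_k$. If the Parikh vectors of the length-$n$ prefixes of $B_k(\mathbf{x})$ form an $\mathcal{N}_k$-synchronized sequence, then $(\rho^k_{\mathbf{x}}(n))_{n\ge0}$ is $\mathcal{N}_k$-regular.
   Context: $u\sim_k v$ if $|u|_w=|v|_w$ for all words $w$ of length at most $k$; $\rho^k_{\mathbf{x}}(n)$ is the number of $\sim_k$-classes of length-$n$ factors of $\mathbf{x}$. $B_k(\mathbf{x})$: the sequence whose $i$-th letter codes (injectively) the factor $x_i\cdots x_{i+k-1}$ of $\mathbf{x}=x_0x_1\cdots$, over an alphabet in bijection with the length-$k$ factors of $\mathbf{x}$. An abstract numeration system with zeros $\mathcal{N}=(L,D,<,0)$: $D$ finite totally ordered with least digit $0$, $L\subseteq D^*$ infinite, containing the empty word, $w\in L\Leftrightarrow 0w\in L$; $\mathrm{rep}(n)$ is the $n$-th word of $L\setminus0^+L$ in radix order; $\mathrm{val}$ gives $n$ to all words of $0^*\mathrm{rep}(n)$. It is regular if $L$ and the addition relation $\{\langle x,y,z\rangle:\mathrm{val}(x)+\mathrm{val}(y)=\mathrm{val}(z)\}$ (words read synchronously, same length) are regular languages. A sequence is automatic if a DFA with output outputs its $n$-th term on valid representations of $n$. $s\colon\mathbb{N}\to\mathbb{N}^m$ is synchronized if $\{\langle x,y_1,\dots,y_m\rangle: s(\mathrm{val}(x))=(\mathrm{val}(y_1),\dots,\mathrm{val}(y_m))\}$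 is regular. A sequence $f$ is regular if $f(n)=\lambda\mu(\mathrm{rep}(n))\gamma$ for a row vector $\lambda$, column vector $\gamma$ and matrix-valued morphism $\mu$. *)

(* Defs.v *)
From HB Require Import structures.
From mathcomp Require Import all_boot all_order all_algebra.
From mathcomp Require Import boolp.
Set Implicit Arguments.
Unset Strict Implicit.
Unset Printing Implicit Defensive.
Import GRing.Theory.
Local Open Scope ring_scope.

Definition occ (A : eqType) (u w : seq A) : nat :=
  (\sum_(i < (size u).+1) (take (size w) (drop i u) == w))%N.

Definition kab_eq (A : finType) (k : nat) (u v : seq A) : bool :=
  [forall m : 'I_k.+1, forall w : m.-tuple A, occ u w == occ v w].

Definition fact_at (A : finType) (x : nat -> A) (n i : nat) : n.-tuple A :=
  [tuple x (i + j)%N | j < n].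

Definition is_factor (A : finType) (x : nat -> A) (n : nat) (u : n.-tuple A)
  : bool := `[< exists i, u = fact_at x n i >].

Definition factors (A : finType) (x : nat -> A) (n : nat) : {set n.-tuple A} :=
  [set u | is_factor x u].

Definition rho (A : finType) (k : nat) (x : nat -> A) (n : nat) : nat :=
  #|[set [set v in factors x n | kab_eq k u v] | u : n.-tuple A in factors x n]|.

Definition factor_alph (A : finType) (x : nat -> A) (k : nat) : finType :=
  {u : k.-tuple A | is_factor x u}.

Lemma fact_at_is_factor (A : finType) (x : nat -> A) (k i : nat) :
  is_factor x (fact_at x k i).
Proof. by apply: asboolT; exists i. Qed.

Definition Bk (A : finType) (k : nat) (x : nat -> A) (i : nat)
  : factor_alph x k :=
  exist _ (fact_at x k i) (fact_at_is_factor x k i).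

Definition parikh_prefix (S : finType) (y : nat -> S) (n : nat)
  : {ffun S -> nat} :=
  [ffun a => (\sum_(i < n) (y i == a))%N].

Record DFAO (S : finType) (O : Type) := {
  dstate : finType;
  dstart : dstate;
  dtrans : dstate -> S -> dstate;
  dout : dstate -> O }.

Definition dfao_run (S : finType) (O : Type) (M : DFAO S O) (w : seq S) : O :=
  @dout S O M (foldl (@dtrans S O M) (@dstart S O M) w).

Definition regular_lang (S : finType) (L : seq S -> Prop) : Prop :=
  exists M : DFAO S bool, forall w, L w <-> dfao_run M w.

Record ANS := { ans_d : nat; ans_L : pred (seq 'I_ans_d.+1) }.
Arguments ans_L : clear implicits.

Definition digit (N : ANS) : finType := 'I_(ans_d N).+1.

Definition ans_wf (N : ANS) : Prop :=
  [/\ ans_L N [::],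
      (forall w, ans_L N (ord0 :: w) = ans_L N w) &
      ~ (exists s : seq (seq (digit N)), forall w, ans_L N w -> w \in s)].

Definition canonical (N : ANS) (w : seq (digit N)) : bool :=
  ans_L N w && (if w is d :: _ then d != ord0 else true).
Arguments canonical : clear implicits.

Fixpoint lexlt (n : nat) (u v : seq 'I_n) : bool :=
  match u, v with
  | a :: u', b :: v' => (a < b)%N || ((a == b) && lexlt u' v')
  | _, _ => false
  end.

Definition radix_lt (n : nat) (u v : seq 'I_n) : bool :=
  (size u < size v)%N || ((size u == size v) && lexlt u v).

Definition strip0 (N : ANS) (w : seq (digit N)) : seq (digit N) :=
  drop (find (fun d : digit N => d != ord0) w) w.

(* val(w) for w in 0^* rep(n) is n, the index (from 0) of strip0 w among
   the canonical words in radix order *)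
Definition val (N : ANS) (w : seq (digit N)) : nat :=
  (\sum_(m < (size (strip0 w)).+1)
     #|[pred t : m.-tuple (digit N) | canonical N t && radix_lt t (strip0 w)]|)%N.

Definition add_lang (N : ANS) (w : seq ((digit N * digit N) * digit N)) : Prop :=
  let x := map (fun p => p.1.1) w in
  let y := map (fun p => p.1.2) w in
  let z := map (fun p => p.2) w in
  [/\ ans_L N x, ans_L N y, ans_L N z & (val x + val y = val z)%N].

Definition regular_ANS (N : ANS) : Prop :=
  ans_wf N /\ regular_lang (fun w : seq (digit N) => ans_L N w)
           /\ regular_lang (@add_lang N).

Definition automatic (N : ANS) (O : Type) (y : nat -> O) : Prop :=
  exists M : DFAO (digit N) O,
    forall w, ans_L N w -> dfao_run M w = y (val w).

Definition sync_lang (N : ANS) (I : finType) (s : nat -> {ffun I -> nat})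
  (w : seq (digit N * {ffun I -> digit N})) : Prop :=
  let x := map fst w in
  let y := fun i : I => map (fun p : digit N * {ffun I -> digit N} => p.2 i) w in
  [/\ ans_L N x, (forall i, ans_L N (y i)) &
      (forall i, s (val x) i = val (y i))].

Definition synchronized (N : ANS) (I : finType) (s : nat -> {ffun I -> nat})
  : Prop := regular_lang (@sync_lang N I s).

Definition mx_morph (D : Type) (r : nat) (mu : D -> 'M[int]_r) (w : seq D)
  : 'M[int]_r := foldl (fun M d => M *m mu d) 1%:M w.

Definition regular_seq (N : ANS) (f : nat -> nat) : Prop :=
  exists (r : nat) (lam : 'rV[int]_r) (mu : digit N -> 'M[int]_r)
         (gam : 'cV[int]_r),
    forall w, canonical N w ->
      (f (val w))%:Z = (lam *m mx_morph mu w *m gam) ord0 ord0.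

(* Main.v *)
From HB Require Import structures.
From mathcomp Require Import all_boot all_order all_algebra.
From mathcomp Require Import boolp.
From mathcomp Require Import zify.
Require Import Defs.
Set Implicit Arguments.
Unset Strict Implicit.
Unset Printing Implicit Defensive.

Section ANSfacts.
Variable N : ANS.
Local Notation D := (digit N).
Local Notation L := (ans_L N).
Hypothesis L0 : forall w, L (ord0 :: w) = L w.

Definition z0 : D := ord0.

Lemma L_nseq z w : L (nseq z z0 ++ w) = L w.
Proof. by elim: z => //= z IH; rewrite L0. Qed.

Lemma strip0_cons0 w : strip0 (z0 :: w) = strip0 w.
Proof. by []. Qed.

Lemma strip0_nseq z w : strip0 (nseq z z0 ++ w) = strip0 w.
Proof. by elim: z => //= z IH; rewrite strip0_cons0. Qed.

Lemma val_nseq z w : val (nseq z z0 ++ w) = val w.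
Proof. by rewrite /val strip0_nseq. Qed.

Definition nz (w : seq D) := find (fun d : D => d != ord0) w.

Lemma strip0_split w : w = nseq (nz w) z0 ++ strip0 w.
Proof.
elim: w => //= d w IH; rewrite /nz /strip0 /=.
case: eqP => [->|] //=; by rewrite {1}IH.
Qed.

Lemma L_strip0 w : L (strip0 w) = L w.
Proof. by rewrite {2}(strip0_split w) L_nseq. Qed.

Lemma strip0_canon w : L w -> canonical N (strip0 w).
Proof.
move=> Lw; rewrite /canonical L_strip0 Lw /=.
rewrite /strip0; case E: (drop _ w) => [|d s] //.
have Hlt : find (fun d : D => d != ord0) w < size w.
  rewrite ltnNge; apply/negP => H; move: E; by rewrite drop_oversize.
have Hh : has (fun d : D => d != ord0) w by rewrite has_find.
have := nth_find ord0 Hh; rewrite -[find _ w]addn0 -nth_drop E /=; by [].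
Qed.

Lemma canon_strip0 c : canonical N c -> strip0 c = c.
Proof. by case: c => [|d c] //= /andP[_ Hd]; rewrite /strip0 /= Hd. Qed.

Lemma lexlt_irr n (u : seq 'I_n) : lexlt u u = false.
Proof. by elim: u => //= a u ->; rewrite ltnn eqxx. Qed.

Lemma lexlt_trans n (u v w : seq 'I_n) : lexlt u v -> lexlt v w -> lexlt u w.
Proof.
elim: u v w => [|a u IH] [|b v] [|c w] //=.
move=> /orP[ab | /andP[/eqP ab uv]] /orP[bc | /andP[/eqP bc vw]]; apply/orP.
- by left; apply: ltn_trans ab bc.
- by left; rewrite -bc.
- by left; rewrite ab.
- by right; rewrite ab bc eqxx (IH _ _ uv vw).
Qed.

Lemma lexlt_total n (u v : seq 'I_n) :
  size u = size v -> u != v -> lexlt u v || lexlt v u.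
Proof.
elim: u v => [|a u IH] [|b v] //= [] Hs Hne.
case: (ltngtP a b) => [ab|ba|ab]; rewrite ?ab ?ba ?orbT //.
have eab : a = b by apply: val_inj.
subst b; rewrite eqxx /=; apply: IH => //.
by apply: contra Hne => /eqP ->.
Qed.

Lemma radix_lt_irr n (u : seq 'I_n) : radix_lt u u = false.
Proof. by rewrite /radix_lt ltnn eqxx lexlt_irr. Qed.

Lemma radix_lt_size n (u v : seq 'I_n) : radix_lt u v -> size u <= size v.
Proof. by rewrite /radix_lt => /orP[/ltnW|/andP[/eqP-> _]]. Qed.

Lemma radix_lt_trans n (u v w : seq 'I_n) : radix_lt u v -> radix_lt v w -> radix_lt u w.
Proof.
rewrite /radix_lt => /orP[uv | /andP[/eqP uv luv]] /orP[vw | /andP[/eqP vw lvw]]; apply/orP.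
- by left; apply: ltn_trans uv vw.
- by left; rewrite -vw.
- by left; rewrite uv.
- by right; rewrite uv vw eqxx (lexlt_trans luv lvw).
Qed.

Lemma radix_lt_total n (u v : seq 'I_n) : u != v -> radix_lt u v || radix_lt v u.
Proof.
move=> Hne; rewrite /radix_lt.
case: (ltngtP (size u) (size v)) => [//|//|Hs] /=.
exact: lexlt_total.
Qed.

Definition allw m : seq (seq D) := map (fun t : m.-tuple D => tval t) (enum {: m.-tuple D}).

Lemma mem_allw m t : (t \in allw m) = (size t == m).
Proof.
apply/idP/idP.
  by move/mapP => [u _ ->]; rewrite size_tuple.
move=> /eqP Ht; apply/mapP; exists (Tuple (introT eqP Ht)) => //.
by rewrite mem_enum.
Qed.

Lemma uniq_allw m : uniq (allw m).
Proof. by rewrite map_inj_uniq ?enum_uniq //; apply: val_inj. Qed.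

Lemma card_allw m (Q : pred (seq D)) :
  #|[pred t : m.-tuple D | Q t]| = count Q (allw m).
Proof. by rewrite cardE /enum_mem size_filter /allw count_map enumT; apply: eq_count. Qed.

Definition wup B := flatten (map allw (iota 0 B.+1)).

Lemma mem_wup B t : (t \in wup B) = (size t <= B).
Proof.
apply/idP/idP.
  by move/flatten_mapP => [m]; rewrite mem_iota mem_allw => /andP[_ Hm] /eqP ->.
move=> Ht; apply/flatten_mapP; exists (size t); first by rewrite mem_iota.
by rewrite mem_allw.
Qed.

Lemma uniq_flat_allw s : uniq s -> uniq (flatten (map allw s)).
Proof.
elim: s => //= a s IH /andP[Has Us]; rewrite cat_uniq uniq_allw IH // andbT.
apply/hasPn => t /flatten_mapP [m ms]; rewrite mem_allw => /eqP Htm.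
rewrite mem_allw Htm; apply/negP => /eqP Hma; subst; by rewrite ms in Has.
Qed.

Lemma uniq_wup B : uniq (wup B).
Proof. by apply: uniq_flat_allw; apply: iota_uniq. Qed.

Definition below (c : seq D) := fun t => canonical N t && radix_lt t c.

Lemma val_count w B : size (strip0 w) <= B ->
  val w = count (below (strip0 w)) (wup B).
Proof.
move=> HB; rewrite /val.
set s := strip0 w.
rewrite (eq_bigr (fun m : 'I_(size s).+1 => count (below s) (allw m))); last first.
  by move=> m _; rewrite -card_allw.
rewrite /wup count_flatten sumnE big_map -/(index_iota 0 B.+1) big_map.
rewrite -(big_mkord xpredT (fun i => count (below s) (allw i))).
rewrite (@big_cat_nat _ _ _ (size s).+1 0 B.+1) //=.
rewrite [X in _ = _ + X]big1_seq ?addn0 // => m /andP[_]; rewrite mem_index_iota => /andP[Hm _].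
apply/eqP; rewrite -leqn0 leqNgt -has_count; apply/hasPn => t.
rewrite mem_allw => /eqP Ht; rewrite /below; apply/negP => /andP[_ /radix_lt_size].
by rewrite Ht leqNgt Hm.
Qed.

Lemma val_canon c B : canonical N c -> size c <= B ->
  val c = count (below c) (wup B).
Proof. by move=> Hc HB; rewrite (@val_count _ B) canon_strip0 // canon_strip0. Qed.

Lemma val_mono c1 c2 : canonical N c1 -> canonical N c2 -> radix_lt c1 c2 ->
  val c1 < val c2.
Proof.
move=> H1 H2 H12; have Hs := radix_lt_size H12.
rewrite (val_canon (B := size c2) H1 Hs) (val_canon (B := size c2) H2) //.
have HI : count (predI (below c1) (pred1 c1)) (wup (size c2)) = 0.
  apply/eqP; rewrite -leqn0 leqNgt -has_count; apply/hasPn => t _ /=.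
  by apply/negP => /andP[/andP[_ Ht] /eqP Htc]; rewrite Htc radix_lt_irr in Ht.
have := count_predUI (below c1) (pred1 c1) (wup (size c2)).
rewrite HI addn0 count_uniq_mem ?uniq_wup // mem_wup Hs addn1 => <-.
apply: sub_count => t /= /orP[/andP[Ht Hlt]|/eqP->]; rewrite /below ?H1 ?Ht //=.
  exact: radix_lt_trans Hlt H12.
Qed.

Lemma val_inj_canon c1 c2 : canonical N c1 -> canonical N c2 -> val c1 = val c2 -> c1 = c2.
Proof.
move=> H1 H2 Hv; apply/eqP; apply/negPn/negP => Hne.
case/orP: (radix_lt_total Hne) => /val_mono Hm.
  by have := Hm H1 H2; rewrite Hv ltnn.
by have := Hm H2 H1; rewrite Hv ltnn.
Qed.

Lemma size_mono c1 c2 : canonical N c1 -> canonical N c2 -> val c1 <= val c2 ->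
  size c1 <= size c2.
Proof.
move=> H1 H2 Hv; rewrite leqNgt; apply/negP => Hs.
have Hlt : radix_lt c2 c1 by rewrite /radix_lt Hs.
by have := val_mono H2 H1 Hlt; rewrite ltnNge Hv.
Qed.

Lemma val_down c j : canonical N c -> j < val c ->
  exists c', canonical N c' /\ val c' = j.
Proof.
move=> Hc Hj.
set s := filter (below c) (wup (size c)).
have Hsz : size s = val c by rewrite size_filter -val_canon.
have Hin : forall t, t \in s -> canonical N t /\ radix_lt t c.
  by move=> t; rewrite mem_filter => /andP[/andP[]].
have Us : uniq (map (@val N) s).
  rewrite map_inj_in_uniq ?filter_uniq ?uniq_wup // => t1 t2 /Hin[C1 _] /Hin[C2 _].
  exact: val_inj_canon.
have Hsub : {subset map (@val N) s <= iota 0 (val c)}.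
  move=> m /mapP[t /Hin[Ct Lt] ->]; rewrite mem_iota /= add0n.
  exact: val_mono.
have Hle : size (iota 0 (val c)) <= size (map (@val N) s) by rewrite size_iota size_map Hsz.
have [_ Heq] := uniq_min_size Us Hsub Hle.
have : j \in map (@val N) s by rewrite Heq mem_iota.
by move/mapP => [t /Hin[Ct _] ->]; exists t.
Qed.


Lemma strip0_idem (w : seq D) : strip0 (strip0 w) = strip0 w.
Proof.
rewrite {1}/strip0; case E: (strip0 w) => [|d s] //=.
have Hlt : find (fun d : D => d != ord0) w < size w.
  rewrite ltnNge; apply/negP => H; move: E; by rewrite /strip0 drop_oversize.
have Hh : has (fun d : D => d != ord0) w by rewrite has_find.
have := nth_find ord0 Hh; rewrite -[find _ w]addn0 -nth_drop -/(strip0 w) E /= => ->.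
by [].
Qed.

Lemma val_strip0 (w : seq D) : val (strip0 w) = val w.
Proof. by rewrite /val strip0_idem. Qed.

Lemma size_strip0 (w : seq D) : size (strip0 w) <= size w.
Proof. by rewrite /strip0 size_drop leq_subr. Qed.

Lemma word_uniq (w1 w2 : seq D) : L w1 -> L w2 -> size w1 = size w2 -> val w1 = val w2 -> w1 = w2.
Proof.
move=> H1 H2 Hs Hv.
have Hc : strip0 w1 = strip0 w2.
  apply: val_inj_canon; rewrite ?strip0_canon // !val_strip0 //.
have Hz : nz w1 = nz w2.
  have E1 := f_equal size (strip0_split w1); have E2 := f_equal size (strip0_split w2).
  rewrite size_cat size_nseq in E1; rewrite size_cat size_nseq in E2.
  rewrite Hc in E1; apply/eqP; by rewrite -(eqn_add2r (size (strip0 w2))) -E1 -E2 Hs.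
by rewrite (strip0_split w1) (strip0_split w2) Hc Hz.
Qed.

Lemma pad_word c l : canonical N c -> size c <= l ->
  exists w, [/\ L w, size w = l & val w = val c].
Proof.
move=> Hc Hl; exists (nseq (l - size c) z0 ++ c); split.
- by rewrite L_nseq; case/andP: Hc.
- by rewrite size_cat size_nseq subnK.
- by rewrite val_nseq.
Qed.

Lemma word_below (w : seq D) j : L w -> j <= val w ->
  exists w', [/\ L w', size w' = size w & val w' = j].
Proof.
move=> Lw; rewrite leq_eqVlt => /orP[/eqP->|Hj]; first by exists w.
have Cs := strip0_canon Lw.
rewrite -val_strip0 in Hj; have [c [Cc Hcj]] := val_down Cs Hj.
have Hsz : size c <= size w.
  apply: leq_trans (size_strip0 w); apply: size_mono => //.
  by rewrite Hcj ltnW.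
by have [w' [L' S' V']] := pad_word Cc Hsz; exists w'; rewrite V' Hcj.
Qed.

Lemma val_nil : val ([::] : seq D) = 0.
Proof.
rewrite (@val_count _ 0) //; apply/eqP; rewrite -leqn0 leqNgt -has_count.
apply/hasPn => t _; rewrite /below /radix_lt ltn0 /=.
by case: t => [|? ?] /=; rewrite ?andbF.
Qed.

Lemma rep_exists (Lnil : L [::]) (ND : forall B, exists c, canonical N c /\ B < size c) j :
  exists c, canonical N c /\ val c = j.
Proof.
elim: j => [|j [c [Cc Vc]]]; first by exists [::]; rewrite val_nil /canonical Lnil.
have [c2 [C2 S2]] := ND (size c).
have Hlt : radix_lt c c2 by rewrite /radix_lt S2.
have := val_mono Cc C2 Hlt; rewrite Vc leq_eqVlt => /orP[/eqP Hj|Hj].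
  by exists c2.
exact: val_down C2 Hj.
Qed.

End ANSfacts.

Section Auto.
Variable S : finType.

Definition mkDFA (T : finType) (s : T) (d : T -> S -> T) (o : T -> bool) : DFAO S bool :=
  @Build_DFAO S bool T s d o.

Lemma run_mk (T : finType) s d o w : dfao_run (@mkDFA T s d o) w = o (foldl d s w).
Proof. by []. Qed.

Definition prodM (M1 M2 : DFAO S bool) (op : bool -> bool -> bool) : DFAO S bool :=
  @mkDFA (dstate M1 * dstate M2)%type (dstart M1, dstart M2)
    (fun p a => (dtrans p.1 a, dtrans p.2 a)) (fun p => op (dout p.1) (dout p.2)).

Lemma foldl_prod (M1 M2 : DFAO S bool) w p :
  foldl (fun p a => (dtrans p.1 a, dtrans p.2 a)) p w =
  (foldl (@dtrans _ _ M1) p.1 w, foldl (@dtrans _ _ M2) p.2 w).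
Proof. by elim: w p => [[]|a w IH] p //=; rewrite IH. Qed.

Lemma run_prod M1 M2 op w : dfao_run (prodM M1 M2 op) w = op (dfao_run M1 w) (dfao_run M2 w).
Proof. by rewrite run_mk foldl_prod. Qed.

Definition outM (O : Type) (M : DFAO S O) (p : O -> bool) : DFAO S bool :=
  @mkDFA (dstate M) (dstart M) (@dtrans _ _ M) (fun s => p (dout s)).

Lemma run_out O (M : DFAO S O) p w : dfao_run (outM M p) w = p (dfao_run M w).
Proof. by []. Qed.

End Auto.

Definition mapM (S S' : finType) (O : Type) (g : S' -> S) (M : DFAO S O) : DFAO S' O :=
  @Build_DFAO S' O (dstate M) (dstart M) (fun s a => dtrans s (g a)) (@dout _ _ M).

Lemma run_map (S S' : finType) (O : Type) (g : S' -> S) (M : DFAO S O) w : dfao_run (mapM g M) w = dfao_run M (map g w).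
Proof.
rewrite /dfao_run /=; congr dout; elim: w (dstart M) => //= a w IH s; by rewrite IH.
Qed.

Section Rep.
Variable N : ANS.
Local Notation D := (digit N).
Local Notation L := (ans_L N).
Hypothesis L0 : forall w, L (ord0 :: w) = L w.
Variable ML : DFAO D bool.
Hypothesis HML : forall w, L w <-> dfao_run ML w.

Definition track (J : finType) (W : seq {ffun J -> D}) (j : J) : seq D := map (fun f : {ffun J -> D} => f j) W.
Definition vals (J : finType) (W : seq {ffun J -> D}) : J -> nat := fun j => val (track W j).

Definition Rep (J : finType) (P : (J -> nat) -> Prop) :=
  exists M : DFAO {ffun J -> D} bool,
    forall W, dfao_run M W <-> ((forall j, L (track W j)) /\ P (vals W)).

Lemma size_track (J : finType) (W : seq {ffun J -> D}) j : size (track W j) = size W.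
Proof. by rewrite size_map. Qed.

Lemma word_ext (J : finType) (V W : seq {ffun J -> D}) : size V = size W ->
  (forall j, track V j = track W j) -> V = W.
Proof.
move=> Hs Ht; apply: (@eq_from_nth _ [ffun => z0 N]) => // p Hp.
apply/ffunP => j; have := f_equal (fun s => nth (z0 N) s p) (Ht j).
by rewrite /track (nth_map [ffun => z0 N]) // (nth_map [ffun => z0 N]) // -Hs.
Qed.

Definition allL (J : finType) : DFAO {ffun J -> D} bool :=
  @mkDFA _ {ffun J -> dstate ML} [ffun => dstart ML]
    (fun (f : {ffun J -> dstate ML}) (a : {ffun J -> D}) => [ffun j => dtrans (f j) (a j)]) (fun f => [forall j, dout (f j)]).

Lemma foldl_allL (J : finType) (W : seq {ffun J -> D}) f :
  foldl (fun (f : {ffun J -> dstate ML}) (a : {ffun J -> D}) => [ffun j => dtrans (f j) (a j)]) f W =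
  [ffun j => foldl (@dtrans _ _ ML) (f j) (track W j)].
Proof.
elim: W f => [|a W IH] f /=; first by apply/ffunP => j; rewrite ffunE.
rewrite IH; apply/ffunP => j; by rewrite !ffunE.
Qed.

Lemma run_allL (J : finType) (W : seq {ffun J -> D}) : dfao_run (allL J) W <-> forall j, L (track W j).
Proof.
rewrite run_mk foldl_allL; split.
  by move=> /forallP H j; apply/HML; have := H j; rewrite !ffunE.
by move=> H; apply/forallP => j; rewrite !ffunE; apply/HML.
Qed.

Lemma Rep_true (J : finType) : Rep (fun _ : J -> nat => True).
Proof. by exists (allL J) => W; rewrite run_allL; tauto. Qed.

Lemma Rep_ext (J : finType) (P Q : (J -> nat) -> Prop) : (forall v, P v <-> Q v) -> Rep P -> Rep Q.
Proof. by move=> HPQ [M HM]; exists M => W; rewrite HM HPQ. Qed.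

Lemma Rep_and (J : finType) (P Q : (J -> nat) -> Prop) : Rep P -> Rep Q -> Rep (fun v => P v /\ Q v).
Proof.
move=> [M1 H1] [M2 H2]; exists (prodM M1 M2 andb) => W.
rewrite run_prod; split.
  by move=> /andP[/H1 [? ?] /H2 [? ?]].
by move=> [HL [HP HQ]]; apply/andP; split; [apply/H1|apply/H2].
Qed.

Lemma Rep_or (J : finType) (P Q : (J -> nat) -> Prop) : Rep P -> Rep Q -> Rep (fun v => P v \/ Q v).
Proof.
move=> [M1 H1] [M2 H2]; exists (prodM M1 M2 orb) => W.
rewrite run_prod; split.
  by move=> /orP[/H1 [? ?]|/H2 [? ?]]; split=> //; [left|right].
by move=> [HL [HP|HQ]]; apply/orP; [left; apply/H1|right; apply/H2].
Qed.

Lemma Rep_not (J : finType) (P : (J -> nat) -> Prop) : Rep P -> Rep (fun v => ~ P v).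
Proof.
move=> [M1 H1]; exists (prodM (allL J) M1 (fun a b => a && ~~ b)) => W.
rewrite run_prod; split.
  move=> /andP[/run_allL HL /negP HN]; split=> // HP; apply: HN; exact/H1.
move=> [HL HN]; apply/andP; split; first exact/run_allL.
by apply/negP => /H1 [].
Qed.

Lemma Rep_subst (J J' : finType) (f : J -> J') (P : (J -> nat) -> Prop) :
  Rep P -> Rep (fun v : J' -> nat => P (fun j => v (f j))).
Proof.
move=> [M HM].
pose g := fun a : {ffun J' -> D} => [ffun j => a (f j)].
have Htr : forall W j, track (map g W) j = track W (f j).
  by move=> W j; rewrite /track -map_comp; apply: eq_map => a /=; rewrite ffunE.
exists (prodM (allL J') (mapM g M) andb) => W.
rewrite run_prod run_map.
have Hv : vals (map g W) = (fun j => vals W (f j)).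
  by apply: funext => j; rewrite /vals Htr.
split.
  by move=> /andP[/run_allL HL /HM [_ HP]]; rewrite -Hv.
move=> [HL HP]; apply/andP; split; first exact/run_allL.
by apply/HM; rewrite Hv; split=> // j; rewrite Htr.
Qed.


Definition projJ (J I : finType) (a : {ffun (J + I)%type -> D}) : {ffun J -> D} :=
  [ffun j => a (inl j)].
Definition joinf (J I : finType) (a : {ffun J -> D}) (e : {ffun I -> D}) : {ffun (J + I)%type -> D} :=
  [ffun x => match x with inl j => a j | inr i => e i end].
Definition ext (J I : Type) (v : J -> nat) (t : I -> nat) : J + I -> nat :=
  fun x => match x with inl j => v j | inr i => t i end.

Definition zJ (J : finType) : {ffun J -> D} := [ffun => z0 N].

Section Ex.
Variables J I : finType.
Variable M : DFAO {ffun (J + I)%type -> D} bool.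

Definition dex (S : {set dstate M}) (a : {ffun J -> D}) : {set dstate M} :=
  [set s' | [exists s in S, exists e : {ffun I -> D}, s' == dtrans s (joinf a e)]].

Definition S0 : {set dstate M} :=
  [set s | `[< exists U, map (@projJ J I) U = nseq (size U) (zJ J) /\ s = foldl (@dtrans _ _ M) (dstart M) U >]].

Definition exM : DFAO {ffun J -> D} bool :=
  @mkDFA _ {set dstate M} S0 dex (fun S => [exists s in S, dout s]).

Lemma foldl_ex W S s' : (s' \in foldl dex S W) <->
  exists s, s \in S /\ exists V, map (@projJ J I) V = W /\ s' = foldl (@dtrans _ _ M) s V.
Proof.
elim: W S => [|a W IH] S /=.
  split; first by move=> Hs; exists s'; split=> //; exists [::].
  by move=> [s [Hs [[|? ?] [//= _ ->]]]].
rewrite IH; split.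
  move=> [s1 [Hs1 [V [HV ->]]]]; move: Hs1; rewrite inE => /existsP[s /andP[Hs /existsP[e /eqP ->]]].
  exists s; split=> //; exists (joinf a e :: V); split=> //=; congr (_ :: _) => //.
  by apply/ffunP => j; rewrite !ffunE.
move=> [s [Hs [V [HV ->]]]]; case: V HV => [//|b V] /= [Hb HV].
exists (dtrans s b); split; last by exists V.
rewrite inE; apply/existsP; exists s; rewrite Hs /=; apply/existsP; exists [ffun i => b (inr i)].
apply/eqP; congr dtrans; apply/ffunP => -[j|i]; rewrite !ffunE //.
by rewrite -Hb ffunE.
Qed.

Lemma run_ex W : dfao_run exM W <->
  exists V z, map (@projJ J I) V = nseq z (zJ J) ++ W /\ dfao_run M V.
Proof.
rewrite run_mk; split.
  move=> /existsP[s /andP[/foldl_ex [s0 [Hs0 [V [HV ->]]]] Ho]].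
  move: Hs0 Ho; rewrite inE => /asboolP [U [HU ->]] Ho.
  exists (U ++ V), (size U); split; first by rewrite map_cat HU HV.
  by rewrite /dfao_run foldl_cat.
move=> [V [z [HV Hrun]]].
have Hsz : z <= size V by rewrite -(size_map (@projJ J I)) HV size_cat size_nseq leq_addr.
apply/existsP; exists (foldl (@dtrans _ _ M) (foldl (@dtrans _ _ M) (dstart M) (take z V)) (drop z V)).
apply/andP; split; last by rewrite -foldl_cat cat_take_drop.
apply/foldl_ex; eexists; split; last first.
  by exists (drop z V); split; first by rewrite map_drop HV drop_size_cat // size_nseq.
rewrite inE; apply/asboolP; exists (take z V); split=> //.
by rewrite map_take HV take_size_cat ?size_nseq // size_take_min (minn_idPl Hsz).
Qed.

End Ex.

Lemma track_proj (J I : finType) (V : seq {ffun (J + I)%type -> D}) j :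
  track (map (@projJ J I) V) j = track V (inl j).
Proof. by rewrite /track -map_comp; apply: eq_map => a /=; rewrite ffunE. Qed.

Lemma track_nseq_cat (J : finType) z (W : seq {ffun J -> D}) j :
  track (nseq z (zJ J) ++ W) j = nseq z (z0 N) ++ track W j.
Proof. by rewrite /track map_cat map_nseq ffunE. Qed.

Definition fromtracks (J : finType) (l : nat) (tr : J -> seq D) : seq {ffun J -> D} :=
  mkseq (fun p => [ffun x => nth (z0 N) (tr x) p]) l.

Lemma track_from (J : finType) l (tr : J -> seq D) x :
  size (tr x) = l -> track (fromtracks l tr) x = tr x.
Proof.
move=> Hs; apply: (@eq_from_nth _ (z0 N)); first by rewrite size_track size_mkseq.
move=> p; rewrite size_track size_mkseq => Hp.
by rewrite /track (nth_map [ffun => z0 N]) ?size_mkseq // nth_mkseq // ffunE.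
Qed.

Lemma size_from (J : finType) l (tr : J -> seq D) : size (fromtracks l tr) = l.
Proof. by rewrite size_mkseq. Qed.

Lemma Rep_ex (Lnil : L [::]) (ND : forall j, exists c, canonical N c /\ val c = j)
  (J I : finType) (P : (J + I -> nat) -> Prop) :
  Rep P -> Rep (fun v : J -> nat => exists t : I -> nat, P (ext v t)).
Proof.
move=> [M HM]; exists (exM M) => W; rewrite run_ex; split.
  move=> [V [z [HV /HM [HL HP]]]].
  have Ht : forall j, track V (inl j) = nseq z (z0 N) ++ track W j.
    by move=> j; rewrite -track_proj HV track_nseq_cat.
  split; first by move=> j; have := HL (inl j); rewrite Ht L_nseq.
  exists (fun i => vals V (inr i)).
  have -> : ext (vals W) (fun i => vals V (inr i)) = vals V => //.
  by apply: funext => -[j|i] //=; rewrite /vals Ht val_nseq.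
move=> [HL [t HP]].
have [c Hc] := choice (fun i => ND (t i)).
set m := \max_(i : I) size (c i).
set l := m + size W.
pose tr := fun x : J + I => match x with
  | inl j => nseq m (z0 N) ++ track W j
  | inr i => nseq (l - size (c i)) (z0 N) ++ c i end.
have Hci : forall i, size (c i) <= l.
  by move=> i; apply: leq_trans (leq_addr _ _); apply: (@leq_bigmax _ (fun i => size (c i)) i).
have Hs : forall x, size (tr x) = l.
  by move=> [j|i]; rewrite /= size_cat size_nseq ?size_track ?subnK.
set V := fromtracks l tr.
exists V, m; split.
  apply: word_ext; first by rewrite size_map size_from size_cat size_nseq.
  by move=> j; rewrite track_proj track_from ?Hs // /track map_cat map_nseq ffunE.
apply/HM; split.
  move=> [j|i]; rewrite track_from ?Hs // /= (L_nseq L0) //.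
  by have [/andP[]] := Hc i.
have -> : vals V = ext (vals W) t => //.
apply: funext => -[j|i]; rewrite /vals track_from ?Hs //= val_nseq //.
by have [_ ->] := Hc i.
Qed.

Lemma Rep_add3 (MA : DFAO ((D * D) * D)%type bool)
  (HA : forall w, add_lang w <-> dfao_run MA w) (J : finType) (a b c : J) :
  Rep (fun v : J -> nat => v a + v b = v c).
Proof.
pose g := fun f : {ffun J -> D} => ((f a, f b), f c).
exists (prodM (allL J) (mapM g MA) andb) => W.
rewrite run_prod run_map.
have E1 : map (fun p => p.1.1) (map g W) = track W a by rewrite -map_comp.
have E2 : map (fun p => p.1.2) (map g W) = track W b by rewrite -map_comp.
have E3 : map (fun p => p.2) (map g W) = track W c by rewrite -map_comp.
split.
  move=> /andP[/run_allL HL /HA]; rewrite /add_lang /= E1 E2 E3 => -[_ _ _ Hv]; by split.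
move=> [HL Hv]; apply/andP; split; first exact/run_allL.
by apply/HA; rewrite /add_lang /= E1 E2 E3; split.
Qed.

Lemma Rep_ypred (O : Type) (y : nat -> O) (My : DFAO D O)
  (Hy : forall w, L w -> dfao_run My w = y (val w)) (J : finType) (a : J) (p : O -> bool) :
  Rep (fun v : J -> nat => p (y (v a))).
Proof.
exists (prodM (allL J) (mapM (fun f : {ffun J -> D} => f a) (outM My p)) andb) => W.
rewrite run_prod run_map run_out -/(track W a); split.
  move=> /andP[/run_allL HL]; by rewrite Hy.
by move=> [HL Hv]; apply/andP; split; [apply/run_allL|rewrite Hy].
Qed.

Lemma Rep_sync (I : finType) (s : nat -> {ffun I -> nat})
  (MS : DFAO (D * {ffun I -> D})%type bool) (HS : forall w, sync_lang s w <-> dfao_run MS w)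
  (J : finType) (a : J) (g : I -> J) :
  Rep (fun v : J -> nat => forall i, s (v a) i = v (g i)).
Proof.
pose h := fun f : {ffun J -> D} => (f a, [ffun i => f (g i)]).
exists (prodM (allL J) (mapM h MS) andb) => W.
rewrite run_prod run_map.
have E1 : map fst (map h W) = track W a by rewrite -map_comp.
have E2 : forall i, map (fun p : D * {ffun I -> D} => p.2 i) (map h W) = track W (g i).
  by move=> i; rewrite -map_comp; apply: eq_map => f /=; rewrite ffunE.
split.
  move=> /andP[/run_allL HL /HS]; rewrite /sync_lang /= E1 => -[_ _ Hv]; split=> // i.
  by rewrite Hv E2.
move=> [HL Hv]; apply/andP; split; first exact/run_allL.
by apply/HS; rewrite /sync_lang /= E1; split=> // i; rewrite E2 ?Hv.
Qed.

End Rep.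

Section Logic.
Variable N : ANS.
Local Notation D := (digit N).
Local Notation L := (ans_L N).
Hypothesis L0 : forall w, L (ord0 :: w) = L w.
Hypothesis Lnil : L [::].
Variable ML : DFAO D bool.
Hypothesis HML : forall w, L w <-> dfao_run ML w.
Hypothesis ND : forall j, exists c, canonical N c /\ val c = j.
Variable MA : DFAO ((D * D) * D)%type bool.
Hypothesis HA : forall w, add_lang w <-> dfao_run MA w.

Local Notation Rep := (@Rep N).

Lemma Rep_ex' (J I : finType) (P : (J + I -> nat) -> Prop) :
  Rep P -> Rep (fun v : J -> nat => exists t : I -> nat, P (ext v t)).
Proof. exact: Rep_ex. Qed.

Lemma Rep_and' (J : finType) (P Q : (J -> nat) -> Prop) : Rep P -> Rep Q -> Rep (fun v => P v /\ Q v).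
Proof. exact: Rep_and. Qed.

Lemma Rep_or' (J : finType) (P Q : (J -> nat) -> Prop) : Rep P -> Rep Q -> Rep (fun v => P v \/ Q v).
Proof. exact: Rep_or. Qed.

Lemma Rep_not' (J : finType) (P : (J -> nat) -> Prop) : Rep P -> Rep (fun v => ~ P v).
Proof. exact: Rep_not. Qed.

Lemma Rep_add (J : finType) (a b c : J) : Rep (fun v : J -> nat => v a + v b = v c).
Proof. exact: Rep_add3. Qed.

Lemma Rep_zero (J : finType) (a : J) : Rep (fun v : J -> nat => v a = 0).
Proof. by apply: Rep_ext (Rep_add a a a) => v; lia. Qed.

Lemma Rep_eq (J : finType) (a b : J) : Rep (fun v : J -> nat => v a = v b).
Proof.
have H := Rep_ex' (Rep_and' (Rep_zero (inr tt : J + unit)) (Rep_add (inl b) (inr tt) (inl a))).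
apply: Rep_ext H => v /=; split.
  by move=> [t [-> H]]; lia.
by move=> H; exists (fun _ => 0); split=> //; lia.
Qed.

Lemma Rep_one (J : finType) (a : J) : Rep (fun v : J -> nat => v a = 1).
Proof.
have H1 := Rep_not' (Rep_zero a).
have H2 := Rep_not' (Rep_ex' (Rep_and' (Rep_add (inr true : J + bool) (inr false) (inl a))
   (Rep_and' (Rep_not' (Rep_zero (inr true : J + bool))) (Rep_not' (Rep_zero (inr false : J + bool)))))).
apply: Rep_ext (Rep_and' H1 H2) => v /=; split.
  move=> [H0 H]; case E: (v a) => [|[|n]] //; exfalso; apply: H.
  by exists (fun b => if b then 1 else n.+1) => /=; rewrite E; split=> //; lia.
move=> ->; split=> // -[t [Ht [Ht1 Ht2]]]; lia.
Qed.

Lemma Rep_succ (J : finType) (a b : J) : Rep (fun v : J -> nat => v b = v a + 1).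
Proof.
have H := Rep_ex' (Rep_and' (Rep_one (inr tt : J + unit)) (Rep_add (inl a) (inr tt) (inl b))).
apply: Rep_ext H => v /=; split.
  by move=> [t [H1 <-]]; rewrite H1.
by move=> ->; exists (fun _ => 1).
Qed.

Lemma Rep_addc c : forall (J : finType) (a b : J), Rep (fun v : J -> nat => v a = v b + c).
Proof.
elim: c => [|c IH] J a b.
  by apply: Rep_ext (Rep_eq a b) => v; rewrite addn0.
have H := Rep_ex' (Rep_and' (IH _ (inr tt : J + unit) (inl b)) (Rep_succ (inr tt : J + unit) (inl a))).
apply: Rep_ext H => v /=; split.
  by move=> [t [-> ->]]; lia.
by move=> ->; exists (fun _ => v b + c); split=> //; lia.
Qed.

Lemma Rep_eqc (J : finType) (a : J) c : Rep (fun v : J -> nat => v a = c).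
Proof.
have H := Rep_ex' (Rep_and' (Rep_zero (inr tt : J + unit)) (Rep_addc c (inl a) (inr tt))).
apply: Rep_ext H => v /=; split.
  by move=> [t [H0 ->]]; rewrite H0.
by move=> ->; exists (fun _ => 0).
Qed.

Lemma Rep_gec (J : finType) (a : J) c : Rep (fun v : J -> nat => c <= v a).
Proof.
have H := Rep_ex' (Rep_addc c (inl a : J + unit) (inr tt)).
apply: Rep_ext H => v /=; split.
  by move=> [t ->]; rewrite leq_addl.
by move=> Hc; exists (fun _ => v a - c); rewrite subnK.
Qed.

Lemma Rep_seqand (J : finType) (X : eqType) (s : seq X) (P : X -> (J -> nat) -> Prop) :
  (forall x, Rep (P x)) -> Rep (fun v => forall x, x \in s -> P x v).
Proof.
move=> HP; elim: s => [|x s IH].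
  by apply: Rep_ext (@Rep_true N ML HML J) => v; split.
apply: Rep_ext (Rep_and' (HP x) IH) => v; split.
  by move=> [H1 H2] y; rewrite inE => /orP[/eqP->|/H2].
by move=> H; split=> [|y Hy]; apply: H; rewrite inE ?eqxx ?Hy ?orbT.
Qed.

Lemma Rep_seqor (J : finType) (X : eqType) (s : seq X) (P : X -> (J -> nat) -> Prop) :
  (forall x, Rep (P x)) -> Rep (fun v => exists x, x \in s /\ P x v).
Proof.
move=> HP; elim: s => [|x s IH].
  by apply: Rep_ext (Rep_not' (@Rep_true N ML HML J)) => v; split=> // -[x []].
apply: Rep_ext (Rep_or' (HP x) IH) => v; split.
  move=> [H|[y [Hy H]]]; first by exists x; rewrite inE eqxx.
  by exists y; rewrite inE Hy orbT.
by move=> [y []]; rewrite inE => /orP[/eqP->|Hy H]; [left|right; exists y].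
Qed.

Lemma Rep_forallF (J X : finType) (P : X -> (J -> nat) -> Prop) :
  (forall x, Rep (P x)) -> Rep (fun v => forall x, P x v).
Proof.
move=> HP; apply: Rep_ext (Rep_seqand (enum X) HP) => v; split.
  by move=> H x; apply: H; rewrite mem_enum.
by move=> H x _.
Qed.

Lemma Rep_existsF (J X : finType) (P : X -> (J -> nat) -> Prop) :
  (forall x, Rep (P x)) -> Rep (fun v => exists x, P x v).
Proof.
move=> HP; apply: Rep_ext (Rep_seqor (enum X) HP) => v; split.
  by move=> [x [_ H]]; exists x.
by move=> [x H]; exists x; rewrite mem_enum.
Qed.

End Logic.

Lemma sum_bool_eq (A : finType) (b : A) (X : bool) :
  (\sum_(d : A) ((b == d) && X))%N = X.
Proof.
rewrite (bigD1 b) //= eqxx big1 ?addn0 // => d /negbTE Hd.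
by rewrite eq_sym Hd.
Qed.

Lemma occ_ext (A : finType) (u w : seq A) :
  occ u w = (take (size w) u == w) + \sum_(d : A) occ u (d :: w).
Proof.
rewrite /occ big_ord_recl /= drop0; congr addn.
rewrite exchange_big big_ord_recr /= drop_size [X in _ = _ + X]big1 ?addn0 //.
case: u => [|a0 u]; first by rewrite !big_ord0.
apply: eq_bigr => p _.
rewrite [in RHS](drop_nth a0) ?ltn_ord //=.
under eq_bigr => d _ do rewrite eqseq_cons.
by rewrite sum_bool_eq add0n.
Qed.

Lemma kabP (A : finType) K (u v : seq A) : 0 < K -> size u = size v ->
  (forall w, size w <= K -> occ u w = occ v w) <->
  (take K.-1 u = take K.-1 v /\ forall w, size w = K -> occ u w = occ v w).
Proof.
move=> HK Hs; split.
  move=> H; split; last by move=> w Hw; apply: H; rewrite Hw.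
  set w := take K.-1 u.
  have Hsw : size w <= K.-1 by rewrite size_take; case: ifP => // /negbT; rewrite -leqNgt.
  have E1 := occ_ext u w; have E2 := occ_ext v w.
  have Hu : take (size w) u = w.
    rewrite /w size_take; case: ifP => [_|]; first by [].
    by move/negbT; rewrite -leqNgt => Hle; rewrite take_size take_oversize.
  have Hsum : (\sum_(d : A) occ u (d :: w) = \sum_(d : A) occ v (d :: w))%N.
    apply: eq_bigr => d _; apply: H => /=; by rewrite -(prednK HK) ltnS.
  move: E1 E2; rewrite Hu eqxx H ?(leq_trans Hsw) ?leq_pred // Hsum => E1.
  rewrite E1 => /eqP; rewrite eqn_add2r eq_sym eqb1 => /eqP Hv.
  rewrite -/w -Hv; move: Hsw; rewrite /w size_take.
  case: ifP => [_ _|_]; first by [].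
  by rewrite Hs => Hle; rewrite take_size take_oversize.
move=> [Hp Hk].
have Hm : forall m, m <= K -> forall w, size w = K - m -> occ u w = occ v w.
  elim=> [|m IH] HmK w Hw; first by apply: Hk; rewrite Hw subn0.
  rewrite occ_ext [RHS]occ_ext.
  have Hsw : size w <= K.-1 by rewrite Hw; lia.
  congr addn.
    by rewrite -(take_takel _ Hsw) Hp take_takel.
  apply: eq_bigr => d _; apply: IH; first by apply: ltnW.
  by rewrite /= Hw; lia.
move=> w Hw; apply: (Hm (K - size w)); first exact: leq_subr.
by rewrite subKn.
Qed.

Section Xcomb.
Variables (A : finType) (k : nat) (x : nat -> A).
Hypothesis hk : 0 < k.

Local Notation S := (factor_alph x k).
Local Notation y := (Bk k x).
Local Notation P := (parikh_prefix (Bk k x)).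

Lemma fact_seq n i : tval (fact_at x n i) = mkseq (fun j => x (i + j)) n.
Proof. by rewrite /fact_at /= /mkseq -val_enum_ord -map_comp. Qed.

Lemma size_fact n i : size (fact_at x n i) = n.
Proof. exact: size_tuple. Qed.

Lemma take_drop_fact n i p m :
  take m (drop p (fact_at x n i)) = mkseq (fun j => x (i + p + j)) (minn m (n - p)).
Proof.
rewrite fact_seq /mkseq -map_drop -map_take drop_iota take_iota add0n.
have -> : iota p (minn m (n - p)) = map (addn p) (iota 0 (minn m (n - p))) by rewrite -iotaDl addn0.
rewrite -map_comp; apply: eq_map => j /=; by rewrite addnA.
Qed.

Lemma y_eq t (c : S) : (y t == c) = (tval (fact_at x k t) == tval (sval c)).
Proof.
apply/eqP/eqP => [<- //|H]; apply: val_inj => /=; exact: val_inj.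
Qed.

Lemma occ_k (w : seq A) n i : size w = k ->
  occ (fact_at x n i) w = (\sum_(p < n - k.-1) (tval (fact_at x k (i + p)) == w))%N.
Proof.
move=> Hw; rewrite /occ size_fact Hw.
rewrite -(big_mkord xpredT (fun p => nat_of_bool (take k (drop p (fact_at x n i)) == w))).
rewrite -(big_mkord xpredT (fun p => nat_of_bool (tval (fact_at x k (i + p)) == w))).
rewrite (@big_cat_nat _ _ _ (n - k.-1) 0 n.+1) //; last by lia.
rewrite [X in _ + X = _]big1_seq ?addn0; last first.
  move=> p /andP[_]; rewrite mem_index_iota => /andP[Hp _].
  apply/eqP; rewrite eqb0; apply/eqP => /(f_equal size); rewrite take_drop_fact size_mkseq Hw; lia.
rewrite !big_seq; apply: eq_bigr => p; rewrite mem_index_iota => /andP[_ Hp].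
rewrite take_drop_fact fact_seq; congr (_ == _); congr mkseq; lia.
Qed.

Lemma dP_sum n i (c : S) :
  (P (i + (n - k.-1)) c - P i c = \sum_(p < n - k.-1) (y (i + p) == c))%N.
Proof.
rewrite !ffunE.
rewrite -(big_mkord xpredT (fun p => nat_of_bool (y p == c))).
rewrite -(big_mkord xpredT (fun p => nat_of_bool (y p == c))).
rewrite -(big_mkord xpredT (fun p => nat_of_bool (y (i + p) == c))).
rewrite (@big_cat_nat _ _ _ i 0 (i + (n - k.-1))) ?leq_addr //= addKn.
rewrite -{1}[i]add0n big_addn addKn; apply: eq_bigr => p _; by rewrite addnC.
Qed.

Definition dP n i : {ffun S -> nat} := [ffun c => P (i + (n - k.-1)) c - P i c].

Lemma dP_val n i c : dP n i c = (\sum_(p < n - k.-1) (y (i + p) == c))%N.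
Proof. by rewrite -dP_sum /dP ffunE. Qed.

Definition preL t (b : seq A) : (k.-1).-tuple (option A) :=
  [tuple nth None (map Some (take t b)) s | s < k.-1].

Definition pre n i : (k.-1).-tuple (option A) := preL k.-1 (fact_at x n i).

Lemma pre_eq n i j :
  (pre n i == pre n j) = (take k.-1 (fact_at x n i) == take k.-1 (fact_at x n j)).
Proof.
apply/eqP/eqP => [H|H]; last by rewrite /pre /preL H.
set s1 := take k.-1 _; set s2 := take k.-1 _.
have Hs1 : size s1 = minn k.-1 n by rewrite size_take size_fact /minn.
have Hs2 : size s2 = minn k.-1 n by rewrite size_take size_fact /minn.
apply: (@inj_map _ _ (@Some A)); first by move=> a b [].
apply: (@eq_from_nth _ None); first by rewrite !size_map Hs1 Hs2.
move=> p; rewrite size_map Hs1 => Hp.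
have Hpk : p < k.-1 by apply: leq_trans Hp (geq_minl _ _).
have := f_equal (fun t => tnth t (Ordinal Hpk)) H.
by rewrite !tnth_mktuple.
Qed.

Lemma kab_eqP (u v : seq A) :
  reflect (forall w : seq A, size w <= k -> occ u w = occ v w) (kab_eq k u v).
Proof.
apply: (iffP forallP) => [H w Hw|H m].
  have Hm : size w < k.+1 by [].
  have := forallP (H (Ordinal Hm)) (Tuple (introT eqP (erefl (size w)))).
  by move/eqP.
apply/forallP => w; apply/eqP; apply: H; rewrite size_tuple -ltnS; exact: ltn_ord.
Qed.

Lemma kab_inv n i j :
  kab_eq k (fact_at x n i) (fact_at x n j) = (pre n i == pre n j) && (dP n i == dP n j).
Proof.
apply/kab_eqP/andP.
  move/(kabP hk (etrans (size_fact n i) (esym (size_fact n j)))) => [Hp Hk].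
  split; first by rewrite pre_eq Hp.
  apply/eqP/ffunP => c; rewrite !dP_val.
  have Hc := size_tuple (sval c).
  have := Hk _ Hc; rewrite !occ_k //.
move=> [/eqP Hp /eqP Hd].
apply/(kabP hk (etrans (size_fact n i) (esym (size_fact n j)))); split.
  by apply/eqP; rewrite -pre_eq Hp.
move=> w Hw; rewrite !occ_k //.
have Hw' : size w == k by rewrite Hw.
case Hf: (is_factor x (Tuple Hw')).
  pose c : S := exist _ (Tuple Hw') Hf.
  have := f_equal (fun f : {ffun S -> nat} => f c) Hd; rewrite /= !dP_val.
  by apply.
have Hz : forall t, (tval (fact_at x k t) == w) = false.
  move=> t; apply/negP => /eqP Heq; move: Hf.
  have -> : Tuple Hw' = fact_at x k t by apply: val_inj; rewrite /= Heq.
  by rewrite fact_at_is_factor.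
by rewrite !big1 // => p _; rewrite Hz.
Qed.

Lemma dP_le n i c : dP n i c <= n.
Proof.
rewrite dP_val; apply: leq_trans (leq_subr k.-1 n).
apply: leq_trans (_ : (\sum_(p < n - k.-1) 1 <= _)%N); first by apply: leq_sum => p _; case: (_ == _).
by rewrite sum_nat_const card_ord muln1.
Qed.

Lemma pre_letter n i : pre n i = preL (minn k.-1 n) (fact_at x k i).
Proof.
rewrite /pre /preL; congr mktuple; apply: funext => s; congr (nth _ (map _ _) _).
rewrite -[fact_at x n i : seq A]drop0 -[fact_at x k i : seq A]drop0 !take_drop_fact.
congr mkseq; lia.
Qed.

End Xcomb.

Import GRing.Theory.
Section P5sec.
Local Open Scope ring_scope.

Lemma Posz_sum (I : Type) (r : seq I) (P : pred I) (F : I -> nat) :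
  Posz (\sum_(i <- r | P i) F i)%N = (\sum_(i <- r | P i) Posz (F i))%R.
Proof. exact: (big_morph Posz PoszD (erefl _)). Qed.

Lemma mx_morph_foldl (D : Type) r (mu : D -> 'M[int]_r) (A : 'M[int]_r) w :
  foldl (fun M d => M *m mu d) A w = A *m mx_morph mu w.
Proof.
rewrite /mx_morph; elim: w A => [|d w IH] A /=; first by rewrite mulmx1.
by rewrite IH (IH (1%:M *m mu d)) mul1mx mulmxA.
Qed.

Lemma mx_morph_cons (D : Type) r (mu : D -> 'M[int]_r) d w :
  mx_morph mu (d :: w) = mu d *m mx_morph mu w.
Proof. by rewrite {1}/mx_morph /= mx_morph_foldl mul1mx. Qed.

Section Count.
Variables (D E T : finType).
Variable dl : T -> D -> E -> T.
Variable gf : T -> nat.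

Fixpoint allE n : seq (seq E) :=
  if n is m.+1 then [seq e :: U | e <- enum E, U <- allE m] else [:: [::]].

Lemma mem_allE n U : (U \in allE n) = (size U == n).
Proof.
elim: n U => [|n IH] [|e U] //=.
  by apply/allpairsP => -[[e' U'] [_ _ /=]].
rewrite eqSS -IH; apply/allpairsP/idP => [[[e' U'] [_ H /= [_ ->]]]//|H].
by exists (e, U); rewrite mem_enum.
Qed.

Lemma uniq_allE n : uniq (allE n).
Proof.
elim: n => //= n IH; apply: allpairs_uniq => //; first exact: enum_uniq.
by move=> [e U] [e' U'] _ _ /= [-> ->].
Qed.

Fixpoint runw (s : T) (w : seq D) (U : seq E) : T :=
  match w, U with
  | d :: w', e :: U' => runw (dl s d e) w' U'
  | _, _ => s
  end.

Definition muM (d : D) : 'M[int]_#|T| :=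
  \matrix_(i, j) (#|[pred e : E | dl (enum_val i) d e == enum_val j]|)%:Z.
Definition gamM : 'cV[int]_#|T| := \col_i (gf (enum_val i))%:Z.

Definition G w t := (\sum_(U <- allE (size w)) gf (runw t w U))%N.

Lemma count_main w s : (mx_morph muM w *m gamM) (enum_rank s) 0 = (G w s)%:Z.
Proof.
elim: w s => [|d w IH] s.
  by rewrite /mx_morph /= mul1mx mxE enum_rankK /G /= big_seq1.
rewrite mx_morph_cons -mulmxA mxE.
under eq_bigr => j _ do rewrite mxE -{2}(enum_valK j) IH -PoszM.
rewrite -Posz_sum; congr Posz.
rewrite /G /= big_allpairs_dep big_enum /=.
rewrite (partition_big (fun e => dl s d e) xpredT) //=.
rewrite (reindex (@enum_val T predT)) /=; last by apply: onW_bij; apply: enum_val_bij.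
apply: eq_bigr => j _.
rewrite enum_rankK -sum_nat_const; apply: eq_big => e.
  by rewrite /= inE.
by rewrite inE => /eqP ->.
Qed.

Variable lf : T -> nat.
Definition lamM : 'rV[int]_#|T| := \row_i (lf (enum_val i))%:Z.

Lemma count_value w :
  (lamM *m mx_morph muM w *m gamM) ord0 ord0 = (\sum_(t : T) lf t * G w t)%N%:Z.
Proof.
rewrite -mulmxA mxE Posz_sum.
rewrite (reindex (@enum_val T predT)) /=; last by apply: onW_bij; apply: enum_val_bij.
apply: eq_bigr => j _; rewrite mxE; have := count_main w (enum_val j); rewrite enum_valK => ->; by rewrite PoszM.
Qed.

End Count.

End P5sec.

Lemma allE_unit n : allE unit n = [:: nseq n tt].
Proof. by elim: n => //= n ->; rewrite enumT unlock. Qed.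

Lemma big_sig_start (T : finType) (t0 : T) (F : T -> nat) :
  (\sum_(t : T) (t == t0) * F t = F t0)%N.
Proof.
rewrite (bigD1 t0) //= eqxx mul1n big1 ?addn0 // => t /negbTE ->; by rewrite mul0n.
Qed.

Section Degenerate.
Variable N : ANS.
Local Notation D := (digit N).
Variable B : nat.
Variable f : nat -> nat.

Definition WS : finType := seq_sub (wup N B).
Definition dgT : finType := option WS.
Definition dg_dl (o : dgT) (d : D) (_ : unit) : dgT :=
  if o is Some t then insub (rcons (ssval t) d) else None.
Definition dg_gf (o : dgT) : nat := if o is Some t then f (val (ssval t)) else 0.
Definition dg_lf (o : dgT) : nat := o == insub ([::] : seq D).

Lemma dg_run (u w : seq D) U : size U = size w -> size (u ++ w) <= B ->
  runw dg_dl (insub u) w U = insub (u ++ w).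
Proof.
elim: w u U => [|d w IH] u U HU Hs; first by case: U HU => //=; rewrite cats0.
have Hu : u \in wup N B by rewrite mem_wup; apply: leq_trans Hs; rewrite size_cat leq_addr.
case: U HU => [//|e U] /= [HU].
by rewrite insubT /= IH ?cat_rcons.
Qed.

Lemma degenerate_regular (Lnil : ans_L N [::])
  (HB : forall c, canonical N c -> size c <= B) : regular_seq N f.
Proof.
exists #|dgT|, (lamM dg_lf), (muM dg_dl), (gamM dg_gf) => w Hw.
rewrite count_value big_sig_start /G allE_unit big_seq1.
have H0 : ([::] : seq D) \in wup N B by rewrite mem_wup.
have := @dg_run [::] w (nseq (size w) tt) (size_nseq _ _) (HB w Hw).
rewrite /= => ->.
by rewrite insubT // mem_wup HB.
Qed.
End Degenerate.

Section Main.
Variables (A : finType) (k : nat) (x : nat -> A) (N : ANS).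
Hypothesis hk : 0 < k.
Local Notation S := (factor_alph x k).
Local Notation y := (Bk k x).
Local Notation Pv := (parikh_prefix (Bk k x)).
Local Notation D := (digit N).
Local Notation L := (ans_L N).
Hypothesis L0 : forall w, L (ord0 :: w) = L w.
Hypothesis Lnil : L [::].
Variable ML : DFAO D bool.
Hypothesis HML : forall w, L w <-> dfao_run ML w.
Hypothesis ND : forall j, exists c, canonical N c /\ val c = j.
Variable MA : DFAO ((D * D) * D)%type bool.
Hypothesis HA : forall w, add_lang w <-> dfao_run MA w.
Variable My : DFAO D S.
Hypothesis Hy : forall w, L w -> dfao_run My w = y (val w).
Variable MS : DFAO (D * {ffun S -> D})%type bool.
Hypothesis HS : forall w, sync_lang Pv w <-> dfao_run MS w.

Local Notation Rep := (@Rep N).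

Definition Acode := ((k.-1).-tuple (option A)).

Definition Ra (a : Acode) (v : option S -> nat) :=
  exists i, pre k x (v None) i = a /\ forall c, v (Some c) = dP k x (v None) i c.

Definition pL (a : Acode) t (b : S) : bool := preL k t (sval b) == a.

Definition VJ : finType := (option S + ('I_3 + (S + S)))%type.
Definition vn : VJ := inl None.
Definition vv c : VJ := inl (Some c).
Definition vi : VJ := inr (inl (@Ordinal 3 0 isT)).
Definition vmu : VJ := inr (inl (@Ordinal 3 1 isT)).
Definition vj : VJ := inr (inl (@Ordinal 3 2 isT)).
Definition vp c : VJ := inr (inr (inl c)).
Definition vq c : VJ := inr (inr (inr c)).

Definition Body (a : Acode) (v : VJ -> nat) :=
  [/\ (v vn = v vmu + k.-1) \/ (~ (k.-1 <= v vn) /\ v vmu = 0),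
      v vi + v vmu = v vj,
      (k.-1 <= v vn /\ pL a k.-1 (y (v vi))) \/
        (exists t : 'I_k.-1, v vn = t /\ pL a t (y (v vi))),
      (forall c, Pv (v vi) c = v (vp c)) /\ (forall c, Pv (v vj) c = v (vq c)) &
      (forall c, v (vp c) + v (vv c) = v (vq c))].

Lemma Rep_Body a : Rep (Body a).
Proof.
have RA := Rep_add HML HA.
have RC1 := Rep_or (Rep_addc L0 Lnil HML ND HA k.-1 vn vmu)
   (Rep_and (Rep_not HML (Rep_gec L0 Lnil HML ND HA vn k.-1)) (Rep_zero Lnil HML HA vmu)).
have RC2 := RA _ vi vmu vj.
have RY := fun t => Rep_ypred HML Hy vi (pL a t).
have RC3 := Rep_or (Rep_and (Rep_gec L0 Lnil HML ND HA vn k.-1) (RY k.-1))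
   (Rep_existsF HML (fun t : 'I_k.-1 => Rep_and (Rep_eqc L0 Lnil HML ND HA vn t) (RY t))).
have RC4 := Rep_and (Rep_sync HML HS vi vp) (Rep_sync HML HS vj vq).
have RC6 := Rep_forallF HML (fun c => RA _ (vp c) (vv c) (vq c)).
apply: Rep_ext (Rep_and RC1 (Rep_and RC2 (Rep_and RC3 (Rep_and RC4 RC6)))) => v.
by split => [[? [? [? [? ?]]]]|[? ? ? ? ?]].
Qed.


Lemma Pmono i m c : Pv i c <= Pv (i + m) c.
Proof.
rewrite !ffunE -(big_mkord xpredT (fun p => nat_of_bool (y p == c))).
rewrite -(big_mkord xpredT (fun p => nat_of_bool (y p == c))).
by rewrite (@big_cat_nat _ _ _ i 0 (i + m)) ?leq_addr //= leq_addr.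
Qed.

Lemma dP_def n i c : dP k x n i c = Pv (i + (n - k.-1)) c - Pv i c.
Proof. by rewrite /dP ffunE. Qed.

Lemma Body_Ra a v : (exists t, Body a (ext v t)) <-> Ra a v.
Proof.
split.
  move=> [t [/= C1 C2 C3 [C4 C5] C6]].
  have Hmu : t (inl (@Ordinal 3 1 isT)) = v None - k.-1.
    case: C1 => [->|[Hn ->]]; first by rewrite addnK.
    by apply/esym/eqP; rewrite subn_eq0 ltnW // ltnNge; apply/negP.
  exists (t (inl (@Ordinal 3 0 isT))); split.
    rewrite pre_letter //; apply/eqP; case: C3 => [[Hge HpL]|[t' [Hn HpL]]].
      by rewrite (minn_idPl Hge).
    by rewrite Hn (minn_idPr (ltnW (ltn_ord t'))).
  move=> c; rewrite dP_def -Hmu C2 C4 C5 -C6 /=.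
  by rewrite addKn.
move=> [i [Hpre Hv]].
set n := v None; set m := n - k.-1.
exists (fun z : 'I_3 + (S + S) => match z with
  | inl o => if (o : nat) == 0 then i else if (o : nat) == 1 then m else i + m
  | inr (inl c) => Pv i c
  | inr (inr c) => Pv (i + m) c end).
split => /=.
- case: (leqP k.-1 n) => H; first by left; rewrite subnK.
  by right; split=> //; apply/eqP; rewrite subn_eq0 ltnW.
- by [].
- move: Hpre; rewrite pre_letter // => Hpre.
  case: (leqP k.-1 n) => H.
    by left; split=> //; rewrite /pL /= -Hpre (minn_idPl H).
  right; exists (Ordinal H); split=> //.
  by rewrite /pL /= -Hpre (minn_idPr (ltnW H)).
- by split.
- move=> c; rewrite /vv /= Hv dP_def -/m subnKC //; exact: Pmono.
Qed.

Lemma Rep_Ra a : Rep (Ra a).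
Proof.
have H := Rep_ex L0 Lnil ND (Rep_Body a).
by apply: Rep_ext H => v; apply: Body_Ra.
Qed.


Definition mk (d : D) (e : {ffun S -> D}) : {ffun option S -> D} :=
  [ffun o => if o is Some c then e c else d].

Definition mkword (w : seq D) (U : seq {ffun S -> D}) := map (fun p => mk p.1 p.2) (zip w U).

Lemma track_mk_None w U : size U = size w -> track (mkword w U) None = w.
Proof.
elim: w U => [|d w IH] [|e U] //= [HU]; by rewrite ffunE IH.
Qed.

Lemma track_mk_Some w U c : size U = size w -> track (mkword w U) (Some c) = track U c.
Proof.
elim: w U => [|d w IH] [|e U] //= [HU]; by rewrite ffunE IH.
Qed.

Lemma kab_refl n (u : n.-tuple A) : kab_eq k u u.
Proof. by apply/kab_eqP. Qed.

Lemma kab_sym n (u v : n.-tuple A) : kab_eq k u v -> kab_eq k v u.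
Proof. by move/kab_eqP => H; apply/kab_eqP => w Hw; rewrite H. Qed.

Lemma kab_trans n (u v t : n.-tuple A) : kab_eq k u v -> kab_eq k v t -> kab_eq k u t.
Proof. by move/kab_eqP => H1 /kab_eqP H2; apply/kab_eqP => w Hw; rewrite H1 ?H2. Qed.

Lemma sum_count (T : Type) (s : seq T) (b : pred T) : (\sum_(i <- s) (b i : nat))%N = count b s.
Proof. by elim: s => [|z s IH]; rewrite ?big_nil ?big_cons ?IH. Qed.

Section Count.
Variable Ma : Acode -> DFAO {ffun option S -> D} bool.
Hypothesis HMa : forall a W, dfao_run (Ma a) W <->
  ((forall o, L (track W o)) /\ Ra a (vals W)).
Variable w : seq D.
Hypothesis Lw : L w.
Local Notation n := (val w).
Local Notation l := (size w).

Definition acc (p : Acode * seq {ffun S -> D}) : bool := dfao_run (Ma p.1) (mkword w p.2).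

Definition codes := [seq (a, U) | a <- enum {: Acode}, U <- allE {ffun S -> D} l].

Definition Fc (p : Acode * seq {ffun S -> D}) : {set n.-tuple A} :=
  [set v in factors x n | `[< exists i, [/\ pre k x n i = p.1,
      (forall c, val (track p.2 c) = dP k x n i c) & kab_eq k (fact_at x n i) v] >]].

Definition Cl := [set [set v in factors x n | kab_eq k u v] | u : n.-tuple A in factors x n].

Lemma acc_iff a U : size U = l -> acc (a, U) <->
  ((forall c, L (track U c)) /\ exists i, pre k x n i = a /\ forall c, val (track U c) = dP k x n i c).
Proof.
move=> HU; rewrite /acc /= HMa; split.
  move=> [HL [i [Hp Hv]]]; split.
    by move=> c; have := HL (Some c); rewrite track_mk_Some.
  exists i; move: Hp Hv; rewrite /vals /= track_mk_None // => Hp Hv; split=> // c.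
  by rewrite -Hv track_mk_Some.
move=> [HL [i [Hp Hv]]]; split.
  by move=> [c|]; rewrite ?track_mk_Some ?track_mk_None.
by exists i; rewrite /vals /= track_mk_None //; split=> // c; rewrite track_mk_Some.
Qed.

Lemma Fc_class a U i : pre k x n i = a -> (forall c, val (track U c) = dP k x n i c) ->
  Fc (a, U) = [set v in factors x n | kab_eq k (fact_at x n i) v].
Proof.
move=> Hp Hv; apply/setP => v; rewrite !inE; congr andb; apply/asboolP/idP.
  move=> [i' [Hp' Hv' Hk]]; apply: kab_trans Hk; apply: kab_sym.
  rewrite kab_inv // Hp Hp' eqxx /=; apply/eqP/ffunP => c; by rewrite -Hv -Hv'.
by move=> Hk; exists i.
Qed.

Lemma Cl_codes : Cl =i map Fc (filter acc codes).
Proof.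
move=> X; apply/imsetP/mapP.
  move=> [u]; rewrite inE => /asboolP [i ->] ->.
  have Hb : forall c, exists t, [/\ L t, size t = l & val t = dP k x n i c].
    by move=> c; apply: word_below => //; apply: dP_le.
  have [tc Htc] := choice Hb.
  set U := fromtracks l tc.
  have HU : size U = l by rewrite size_from.
  have HtU : forall c, track U c = tc c by move=> c; rewrite track_from //; have [] := Htc c.
  exists (pre k x n i, U).
    rewrite mem_filter; apply/andP; split.
      apply/acc_iff => //; split; first by move=> c; rewrite HtU; have [] := Htc c.
      by exists i; split=> // c; rewrite HtU; have [] := Htc c.
    by apply: allpairs_f; rewrite ?mem_enum ?mem_allE ?HU.
  by rewrite (Fc_class (i := i)) // => c; rewrite HtU; have [] := Htc c.
move=> [[a U]]; rewrite mem_filter => /andP[Hacc Hin] ->.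
have HU : size U = l.
  by move: Hin => /allpairsP [[a' U'] [_ /=]]; rewrite mem_allE => /eqP HU' [_ ->].
have [_ [i [Hp Hv]]] := (acc_iff a HU).1 Hacc.
exists (fact_at x n i); first by rewrite inE fact_at_is_factor.
exact: Fc_class.
Qed.

Lemma uniq_codes : uniq codes.
Proof.
apply: allpairs_uniq; [exact: enum_uniq | exact: uniq_allE |].
by move=> [? ?] [? ?] _ _ /= [-> ->].
Qed.

Lemma Fc_inj : {in filter acc codes &, injective Fc}.
Proof.
move=> [a1 U1] [a2 U2]; rewrite !mem_filter => /andP[H1 I1] /andP[H2 I2] HF.
have HU1 : size U1 = l.
  by move: I1 => /allpairsP [[a' U'] [_ /=]]; rewrite mem_allE => /eqP HU' [_ ->].
have HU2 : size U2 = l.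
  by move: I2 => /allpairsP [[a' U'] [_ /=]]; rewrite mem_allE => /eqP HU' [_ ->].
have [L1 [i1 [Hp1 Hv1]]] := (acc_iff a1 HU1).1 H1.
have [L2 [i2 [Hp2 Hv2]]] := (acc_iff a2 HU2).1 H2.
move: HF; rewrite (Fc_class Hp1 Hv1) (Fc_class Hp2 Hv2) => HF.
have : fact_at x n i2 \in [set v in factors x n | kab_eq k (fact_at x n i2) v].
  by rewrite inE kab_refl andbT inE fact_at_is_factor.
rewrite -HF inE => /andP[_]; rewrite kab_inv // => /andP[/eqP Hp /eqP Hd].
have Ha : a1 = a2 by rewrite -Hp1 -Hp2 Hp.
have HU : U1 = U2.
  apply: word_ext; first by rewrite HU1 HU2.
  move=> c; apply: (word_uniq L0); rewrite ?size_track ?HU1 ?HU2 //.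
  by rewrite Hv1 Hv2 Hd.
by rewrite Ha HU.
Qed.

Lemma rho_count : rho k x n = count acc codes.
Proof.
rewrite /rho -/Cl (eq_card Cl_codes).
have /card_uniqP -> : uniq (map Fc (filter acc codes)).
  by rewrite map_inj_in_uniq ?filter_uniq ?uniq_codes //; exact: Fc_inj.
by rewrite size_map size_filter.
Qed.

End Count.

End Main.

Section Final.
Variables (A : finType) (k : nat) (x : nat -> A) (N : ANS).
Local Notation S := (factor_alph x k).
Local Notation D := (digit N).
Variable Ma : Acode A k -> DFAO {ffun option S -> D} bool.

Definition TT : finType := {a : Acode A k & dstate (Ma a)}.
Definition fdl (t : TT) (d : D) (e : {ffun S -> D}) : TT :=
  Tagged (fun a => dstate (Ma a)) (dtrans (tagged t) (mk d e)).
Definition fgf (t : TT) : nat := dout (tagged t).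
Definition flf (t : TT) : nat := tagged t == dstart (Ma (tag t)).

Lemma runw_tag a (s : dstate (Ma a)) w U :
  runw fdl (Tagged (fun a => dstate (Ma a)) s) w U =
  Tagged (fun a => dstate (Ma a)) (foldl (@dtrans _ _ (Ma a)) s (mkword w U)).
Proof. by elim: w s U => [|d w IH] s [|e U] //=; rewrite IH. Qed.

Lemma final_sum w :
  (\sum_(t : TT) flf t * G fdl fgf w t)%N = count (acc Ma w) (codes k x w).
Proof.
rewrite -sum_count big_allpairs big_enum /=.
have E : (\sum_(t : TT) flf t * G fdl fgf w t =
   \sum_a \sum_(s : dstate (Ma a)) flf (Tagged (fun a => dstate (Ma a)) s) * G fdl fgf w (Tagged (fun a => dstate (Ma a)) s))%N.
  rewrite sig_big_dep /=; apply: eq_big => [[a s]|[a s] _] //.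
rewrite E; apply: eq_bigr => a _.
rewrite /flf /= (big_sig_start (dstart (Ma a)) (fun s => G fdl fgf w (Tagged (fun a => dstate (Ma a)) s))).
rewrite /G; apply: eq_bigr => U _.
by rewrite runw_tag.
Qed.

End Final.

Theorem theorem40 (A : finType) (k : nat) (x : nat -> A) (Nk : ANS) :
  (1 <= k)%N ->
  regular_ANS Nk ->
  automatic Nk (Bk k x) ->
  synchronized Nk (parikh_prefix (Bk k x)) ->
  regular_seq Nk (rho k x).
Proof.
move=> hk [[Lnil L0 _] [[ML HML] [MA HA]]] [My Hy] [MS HS].
case: (EM (exists B, forall c, canonical Nk c -> size c <= B)) => [[B HB]|Hno].
  exact: degenerate_regular Lnil HB.
have NDB : forall B, exists c, canonical Nk c /\ B < size c.
  move=> B; apply: contrapT => H; apply: Hno; exists B => c Hc.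
  rewrite leqNgt; apply/negP => HB; apply: H; by exists c.
have ND := rep_exists Lnil NDB.
have HR := Rep_Ra hk L0 Lnil HML ND HA Hy HS.
have [Ma HMa] := choice HR.
exists #|TT Ma|, (lamM (@flf _ _ _ _ Ma)), (muM (@fdl _ _ _ _ Ma)), (gamM (@fgf _ _ _ _ Ma)) => w Hw.
have Lw : ans_L Nk w by case/andP: Hw.
by rewrite count_value final_sum -(rho_count hk L0 HMa Lw).
Qed.
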